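(* Let $n\ge 2$, let $A_1,\dots,A_n$ be $n$ pairwise distinct points in the plane, and let $\Gamma$ be a circle with centre $O$. Suppose that for every $k\in\{1,2,\dots,n-1\}$ the quantity $\sum_{i=1}^n |PA_i|^{2k}$ does not depend on the position of the point $P\in\Gamma$. Then $A_1,\dots,A_n$ are the vertices of a regular $n$-gon inscribed in a circle centred at $O$.
   Context: $|PA|$ denotes Euclidean distance. For $n=2$ a ''regular $2$-gon inscribed in a circle centred at $O$'' means two distinct points symmetric with respect to $O$. *)

(* Defs.v *)
From Stdlib Require Import Reals Lra Lia.
Open Scope R_scope.

Definition point := (R * R)%type.

Definition dist2 (P Q : point) : R :=
  (fst P - fst Q) ^ 2 + (snd P - snd Q) ^ 2.

Fixpoint sumn (n : nat) (f : nat -> R) : R :=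
  match n with
  | O => 0
  | S m => sumn m f + f m
  end.

Definition on_circle (O : point) (r : R) (P : point) : Prop :=
  dist2 P O = r ^ 2.

Definition ngon_vertex (O : point) (rho theta : R) (n j : nat) : point :=
  (fst O + rho * cos (theta + 2 * PI * INR j / INR n),
   snd O + rho * sin (theta + 2 * PI * INR j / INR n)).

(* A_0, ..., A_{n-1} are (in some order) the vertices of a regular n-gon
   inscribed in a circle centred at O (of positive radius). *)
Definition regular_ngon_centred (O : point) (n : nat) (A : nat -> point) : Prop :=
  exists (rho theta : R) (sigma : nat -> nat),
    0 < rho /\
    (forall i, (i < n)%nat -> (sigma i < n)%nat) /\
    (forall i j, (i < n)%nat -> (j < n)%nat -> sigma i = sigma j -> i = j) /\
    (forall i, (i < n)%nat -> A i = ngon_vertex O rho theta n (sigma i)).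

(* Main.v *)
Require Import Defs.
From Stdlib Require Import Reals Lra Lia ZArith ClassicalEpsilon.
Open Scope R_scope.

Lemma polar_ex (u v : R) : u <> 0 \/ v <> 0 ->
  exists rho phi, 0 < rho /\ u = rho * cos phi /\ v = rho * sin phi.
Proof.
intros H.
assert (Hp : 0 < u * u + v * v).
{ destruct H as [H|H]; [assert (0 < u*u) by (apply Rsqr_pos_lt; auto) |
   assert (0 < v*v) by (apply Rsqr_pos_lt; auto)]; nra. }
set (rho := sqrt (u * u + v * v)).
assert (Hr : 0 < rho) by (apply sqrt_lt_R0; auto).
assert (Hr2 : rho * rho = u * u + v * v) by (apply sqrt_sqrt; lra).
set (c := u / rho).
assert (Hc : u = rho * c) by (unfold c; field; lra).
assert (Hc1 : -1 <= c <= 1).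
{ assert (c * c <= 1).
  { apply Rmult_le_reg_l with (rho * rho). nra.
    replace (rho * rho * (c * c)) with (u * u) by (rewrite Hc; ring). nra. }
  split; nra. }
assert (Hs : rho * sqrt (1 - c²) = Rabs v).
{ rewrite <- (sqrt_Rsqr rho) by lra. rewrite <- sqrt_mult_alt.
  2: unfold Rsqr; nra.
  rewrite <- sqrt_Rsqr_abs. f_equal. unfold Rsqr. rewrite Hc in Hr2. nra. }
destruct (Rle_dec 0 v) as [Hv|Hv].
- exists rho, (acos c). split; [exact Hr|split].
  + rewrite cos_acos; auto.
  + rewrite sin_acos; auto. rewrite Hs. rewrite Rabs_right; lra.
- exists rho, (- acos c). split; [exact Hr|split].
  + rewrite cos_neg, cos_acos; auto.
  + rewrite sin_neg, sin_acos; auto. rewrite Ropp_mult_distr_r_reverse, Hs.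
    rewrite Rabs_left; lra.
Qed.

Lemma cos_eq1 (t : R) : cos t = 1 -> exists m : Z, t = 2 * IZR m * PI.
Proof.
intros H.
assert (H2 : sin (t / 2) = 0).
{ pose proof (cos_2a_sin (t / 2)) as E. replace (2 * (t / 2)) with t in E by field.
  assert (E2 : sin (t/2) * sin (t/2) = 0) by lra.
  destruct (Rmult_integral _ _ E2); auto. }
destruct (sin_eq_0_0 _ H2) as [m Hm]. exists m.
replace t with (2 * (t / 2)) by field. rewrite Hm. ring.
Qed.

Lemma cos_periodZ (t : R) (m : Z) : cos (t + 2 * IZR m * PI) = cos t /\ sin (t + 2 * IZR m * PI) = sin t.
Proof.
destruct (Z_le_gt_dec 0 m) as [Hm|Hm].
- rewrite <- (Z2Nat.id m Hm), <- INR_IZR_INZ.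
  split; [apply cos_period | apply sin_period].
- assert (E : IZR m = - INR (Z.to_nat (- m))).
  { rewrite INR_IZR_INZ, Z2Nat.id by lia. rewrite opp_IZR. ring. }
  rewrite E.
  set (k := Z.to_nat (-m)).
  pose proof (cos_period (t + 2 * - INR k * PI) k) as C1.
  pose proof (sin_period (t + 2 * - INR k * PI) k) as S1.
  replace (t + 2 * - INR k * PI + 2 * INR k * PI) with t in C1, S1 by ring.
  split; auto.
Qed.

Lemma trig_fin (a b c1 s1 c2 s2 : R) : 0 < a -> 0 < b -> a * c1 = b * c2 -> a * s1 = b * s2 ->
  c1 * c1 + s1 * s1 = 1 -> c2 * c2 + s2 * s2 = 1 -> a = b /\ c1 * c2 + s1 * s2 = 1.
Proof.
intros Ha Hb E1 E2 N1 N2.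
assert (Hab : a * a = b * b).
{ transitivity ((a*c1)*(a*c1) + (a*s1)*(a*s1)). { rewrite <- (Rmult_1_r (a*a)), <- N1. ring. }
  rewrite E1, E2. transitivity (b*b*(c2*c2+s2*s2)). ring. rewrite N2. ring. }
assert (Eab : a = b) by nra.
subst b. split; auto.
assert (c1 = c2) by (apply Rmult_eq_reg_l with a; lra).
assert (s1 = s2) by (apply Rmult_eq_reg_l with a; lra).
subst. lra.
Qed.

Lemma assemble (n : nat) (A : nat -> point) (O : point) :
  (2 <= n)%nat ->
  (forall i j, (i < n)%nat -> (j < n)%nat -> i <> j -> A i <> A j) ->
  (forall i, (i < n)%nat -> fst (A i) - fst O <> 0 \/ snd (A i) - snd O <> 0) ->
  (forall i, (i < n)%nat -> forall rho1 phi1 rho2 phi2, 0 < rho1 -> 0 < rho2 ->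
     fst (A 0%nat) - fst O = rho1 * cos phi1 -> snd (A 0%nat) - snd O = rho1 * sin phi1 ->
     fst (A i) - fst O = rho2 * cos phi2 -> snd (A i) - snd O = rho2 * sin phi2 ->
     rho2 = rho1 /\ cos (INR n * phi2 - INR n * phi1) = 1) ->
  regular_ngon_centred O n A.
Proof.
intros Hn Hd Hnz Hpow.
assert (H0n : (0 < n)%nat) by lia.
destruct (polar_ex _ _ (Hnz 0%nat H0n)) as [rho [th [Hr [Hx0 Hy0]]]].
assert (Hn0 : INR n <> 0) by (apply not_0_INR; lia).
assert (H : forall i, exists m, (i < n)%nat -> (m < n)%nat /\ A i = ngon_vertex O rho th n m).
{ intros i. destruct (Nat.lt_ge_cases i n) as [Hi|Hi]; [|exists 0%nat; lia].
  destruct (polar_ex _ _ (Hnz i Hi)) as [rho2 [ph [Hr2 [Hx Hy]]]].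
  destruct (Hpow i Hi rho th rho2 ph Hr Hr2 Hx0 Hy0 Hx Hy) as [E1 E2].
  destruct (cos_eq1 _ E2) as [M HM].
  set (m := Z.to_nat (M mod Z.of_nat n)).
  exists m. intros _.
  assert (Hmb : (0 <= M mod Z.of_nat n < Z.of_nat n)%Z) by (apply Z.mod_pos_bound; lia).
  split.
  { unfold m. lia. }
  assert (HM2 : IZR M = INR n * IZR (M / Z.of_nat n) + INR m).
  { unfold m. rewrite !INR_IZR_INZ, Z2Nat.id by lia.
    rewrite <- mult_IZR, <- plus_IZR. f_equal. apply Z.div_mod. lia. }
  assert (Hph : ph = (th + 2 * PI * INR m / INR n) + 2 * IZR (M / Z.of_nat n) * PI).
  { apply Rmult_eq_reg_l with (INR n); auto.
    replace (INR n * ph) with (INR n * th + 2 * IZR M * PI) by lra.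
    rewrite HM2. field. auto. }
  destruct (cos_periodZ (th + 2 * PI * INR m / INR n) (M / Z.of_nat n)) as [C S].
  rewrite <- Hph in C, S.
  unfold ngon_vertex. rewrite <- C, <- S, <- E1, <- Hx, <- Hy.
  destruct (A i); simpl; f_equal; ring. }
exists rho, th, (fun i => proj1_sig (constructive_indefinite_description _ (H i))).
split; [exact Hr|]. split; [|split].
- intros i Hi. destruct (constructive_indefinite_description _ (H i)) as [m Hm]; simpl.
  apply Hm; auto.
- intros i j Hi Hj.
  destruct (constructive_indefinite_description _ (H i)) as [m Hm]; simpl.
  destruct (constructive_indefinite_description _ (H j)) as [m' Hm']; simpl.
  intros E. subst m'.
  destruct (Hm Hi) as [_ Ei]. destruct (Hm' Hj) as [_ Ej].
  destruct (Nat.eq_dec i j) as [e|ne]; auto.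
  exfalso. apply (Hd i j Hi Hj ne). congruence.
- intros i Hi. destruct (constructive_indefinite_description _ (H i)) as [m Hm]; simpl.
  apply Hm; auto.
Qed.

From HB Require Import structures.
From mathcomp Require all_boot all_order all_algebra complex Rstruct ring lra.

Module Aux.
Import all_boot all_order all_algebra complex Rstruct ring lra.
Import Order.TTheory GRing.Theory Num.Theory.
Section Newton.
Local Open Scope ring_scope.
Variable F : numFieldType.

Lemma deriv_prodX (a : nat -> F) n :
  (\prod_(0 <= j < n) ('X - (a j)%:P))^`() =
  \sum_(0 <= i < n) \prod_(0 <= j < n | j != i) ('X - (a j)%:P).
Proof.
elim: n => [|n IH]; first by rewrite !big_geq // derivC.
rewrite big_nat_recr //= derivM IH derivXsubC mulr1 big_nat_recr //=.
rewrite [X in _ = _ + X]big_mkcond big_nat_recr //= eqxx mulr1.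
rewrite [X in _ = _ + X](eq_big_nat _ _ (F2 := fun j => 'X - (a j)%:P)); last first.
  by move=> j /andP[_ hj]; rewrite (ltn_eqF hj).
congr (_ + _); rewrite mulr_suml; apply: eq_big_nat => i /andP[_ hi].
rewrite [in RHS]big_mkcond big_nat_recr //= (gtn_eqF hi) -big_mkcond //.
Qed.
End Newton.
Section Newton2.
Local Open Scope ring_scope.
Variable F : numFieldType.

Lemma coef_div_lin (q D : {poly F}) (c : F) :
  q = ('X - c%:P) * D -> forall t u,
  D`_t = \sum_(j < u) q`_(t + j).+1 * c ^+ j + c ^+ u * D`_(t + u).
Proof.
move=> hq t u; elim: u => [|u IH].
  by rewrite big_ord0 add0r expr0 mul1r addn0.
have h : forall s, q`_s.+1 = D`_s - c * D`_s.+1.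
  by move=> s; rewrite hq mulrBl coefB coefXM coefCM.
rewrite IH big_ord_recr /= h addnS exprS; ring.
Qed.

Lemma newton_pow (n : nat) (a : nat -> F) :
  (forall m, (0 < m < n)%N -> \sum_(0 <= i < n) a i ^+ m = 0) ->
  forall i, (i < n)%N -> a i ^+ n = - (\prod_(0 <= j < n) ('X - (a j)%:P))`_0.
Proof.
move=> hp.
set q := \prod_(0 <= j < n) ('X - (a j)%:P).
pose D i := \prod_(0 <= j < n | j != i) ('X - (a j)%:P).
have hqD : forall i, (i < n)%N -> q = ('X - (a i)%:P) * D i.
  by move=> i hi; rewrite /q (bigD1_seq i) ?mem_index_iota ?iota_uniq.
have hsq : size q = n.+1.
  rewrite /q /index_iota subn0 -(big_map a xpredT (fun x => 'X - x%:P)).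
  by rewrite size_prod_XsubC size_map size_iota.
have hlead : q`_n = 1.
  have hm : q \is monic by apply: monic_prod_XsubC.
  by move/monicP: hm; rewrite /lead_coef hsq.
have hsD : forall i, (i < n)%N -> size (D i) = n.
  move=> i hi; have := hsq; rewrite (hqD i hi).
  have hD0 : D i != 0.
    apply/eqP => hD; move: hsq; rewrite (hqD i hi) hD mulr0 size_poly0 //.
  rewrite size_mul ?polyXsubC_eq0 // size_XsubC /=; by case.
have hcD : forall i t, (i < n)%N ->
   (D i)`_t = \sum_(j < n) q`_(t + j).+1 * a i ^+ j.
  move=> i t hi; rewrite (coef_div_lin _ _ _ (hqD i hi) t n).
  rewrite [X in _ + _ * X]nth_default ?mulr0 ?addr0 // hsD //; lia.
have hder : forall t, q`_t.+1 *+ t.+1 = q`_t.+1 *+ n.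
  move=> t; rewrite -coef_deriv deriv_prodX -/q coef_sum.
  rewrite (eq_big_nat _ _ (F2 := fun i => \sum_(j < n) q`_(t + j).+1 * a i ^+ j)); last first.
    by move=> i /andP[_ hi]; rewrite hcD.
  rewrite exchange_big /=.
  destruct n as [|n']; first by rewrite big_ord0 mulr0n.
  rewrite big_ord_recl /= addn0.
  rewrite [X in _ + X]big1; last first.
    move=> j _; rewrite -mulr_sumr hp ?mulr0 //.
    by apply/andP; split => //; rewrite ltnS.
  rewrite addr0 -mulr_sumr (eq_bigr (fun _ => 1)); last by move=> *; rewrite expr0.
  by rewrite sumr_const_nat subn0 mulr_natr.
have hz : forall m, (0 < m < n)%N -> q`_m = 0.
  case=> [//|m] /andP[_ hm].
  have := hder m; move/eqP; rewrite eq_sym -subr_eq0 -mulrnBr; last by apply: ltnW.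
  by rewrite mulrn_eq0 subn_eq0 leqNgt hm /= => /eqP.
move=> i hi.
have := hqD i hi => hqi.
have hr : q.[a i] = 0 by rewrite hqi hornerM hornerXsubC subrr mul0r.
move: hr; rewrite horner_coef hsq big_ord_recr /= hlead mul1r.
destruct n as [|n']; first by [].
rewrite big_ord_recl big1 /=.
  by rewrite expr0 mulr1 addr0 => /eqP; rewrite addrC addr_eq0 => /eqP.
move=> j _; rewrite hz ?mul0r //.
rewrite /bump leq0n add1n ltnS.
by rewrite ltnS ltn_ord.
Qed.
End Newton2.
Section Step1.
Local Open Scope ring_scope.

Lemma poly_all_roots (p : {poly R}) : (forall x, p.[x] = 0) -> p = 0.
Proof.
move=> h; apply: (roots_geq_poly_eq0 (rs := [seq (i%:R : R) | i <- iota 0 (size p)])).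
- by apply/allP => z /mapP[i _ ->]; apply/rootP; rewrite h.
- rewrite map_inj_uniq ?iota_uniq //.
  by move=> i j /eqP; rewrite eqr_nat => /eqP.
- by rewrite size_map size_iota.
Qed.

Local Open Scope complex_scope.

Lemma cplxE (u v : R) : u +i* v = u%:C + v%:C * 'i.
Proof. by apply/eqP; rewrite eq_complex /=; simpc. Qed.

Lemma step1 (n k : nat) (x y : nat -> R) (r C : R) : r != 0 -> (0 < k)%N ->
  (forall s : R, \sum_(0 <= i < n) ((r^+2 + x i^+2 + y i^+2) * (1 + s^+2)
       - 2*r*(x i * (1 - s^+2) + 2 * y i * s))^+k = C * (1 + s^+2)^+k) ->
  \sum_(0 <= i < n) (x i +i* y i)^+k = 0.
Proof.
move=> r0 k0 h.
pose Q i : {poly R[i]} := ((r^+2 + x i^+2 + y i^+2)%:C)%:P * (1 + 'X^2)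
       - ((2*r)%:C)%:P * (((x i)%:C)%:P * (1 - 'X^2) + ((2 * y i)%:C)%:P * 'X).
pose G := \sum_(0 <= i < n) Q i ^+ k - (C%:C)%:P * (1 + 'X^2)^+k.
have hQ : forall i (s : R), (Q i).[s%:C] = ((r^+2 + x i^+2 + y i^+2) * (1 + s^+2)
       - 2*r*(x i * (1 - s^+2) + 2 * y i * s))%:C.
  move=> i s; rewrite /Q !hornerE.
  by rewrite !(rmorphB, rmorphM, rmorphD, rmorphXn, rmorph1, rmorph_nat).
have G0 : G = 0.
  apply: (roots_geq_poly_eq0 (rs := [seq ((i%:R : R)%:C) | i <- iota 0 (size G)])).
  - apply/allP => z /mapP[j _ ->]; apply/rootP.
    rewrite /G hornerD hornerN horner_sum.
    rewrite (eq_bigr (fun i => (((r^+2 + x i^+2 + y i^+2) * (1 + (j%:R : R)^+2)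
       - 2*r*(x i * (1 - (j%:R : R)^+2) + 2 * y i * (j%:R : R)))^+k)%:C)); last first.
      by move=> i _; rewrite horner_exp hQ rmorphXn.
    rewrite -rmorph_sum h !hornerE.
    rewrite !(rmorphB, rmorphM, rmorphD, rmorphXn, rmorph1, rmorph_nat).
    by rewrite subrr.
  - rewrite map_inj_uniq ?iota_uniq //.
    by move=> i j /complexI /eqP; rewrite eqr_nat => /eqP.
  - by rewrite size_map size_iota.
have := congr1 (fun p => p.['i]) G0.
rewrite /= horner0 /G hornerD hornerN horner_sum.
rewrite (eq_bigr (fun i => ((-(4 * r))%:C)^+k * (x i +i* y i)^+k)); last first.
  move=> i _; rewrite /Q horner_exp !hornerE -exprMn; congr (_ ^+ _).
  rewrite !exprS expr0 !mulr1.
  apply/eqP; rewrite eq_complex /=; simpc.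
  by apply/andP; split; apply/eqP; ring.
rewrite !hornerE sqr_i addrN expr0n eqn0Ngt k0 /= mulr0 subr0.
move=> H.
have hne : ((-(4*r))%:C)^+k != 0.
  by rewrite expf_neq0 // fmorph_eq0 oppr_eq0 mulf_eq0 negb_or r0 andbT pnatr_eq0.
by apply: (mulfI hne); rewrite mulr0 mulr_sumr.
Qed.
End Step1.
Section Final.
Local Open Scope ring_scope.

Lemma sumn_big (n : nat) (f : nat -> R) : Defs.sumn n f = \sum_(0 <= i < n) f i.
Proof.
elim: n => [|n IH]; first by rewrite big_geq.
by rewrite big_nat_recr //= IH.
Qed.

Local Open Scope complex_scope.

Lemma demoivre (rho phi : R) (n : nat) :
  ((rho * cos phi) +i* (rho * sin phi)) ^+ n =
  (rho ^+ n * cos (INR n * phi)) +i* (rho ^+ n * sin (INR n * phi)).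
Proof.
elim: n => [|n IH].
  by rewrite !expr0 /= Rmult_0_l cos_0 sin_0; apply/eqP; rewrite eq_complex /=; simpc.
rewrite exprS IH.
have -> : Rmult (INR n.+1) phi = Rplus phi (Rmult (INR n) phi).
  by rewrite S_INR Rmult_plus_distr_r Rmult_1_l Rplus_comm.
rewrite cos_plus sin_plus !RmultE !RminusE !RplusE.
apply/eqP; rewrite eq_complex /=; simpc.
by apply/andP; split; apply/eqP; rewrite exprS; ring.
Qed.

Lemma demoivre_eq (n : nat) (rho1 phi1 rho2 phi2 : R) : (0 < n)%N ->
  0 < rho1 -> 0 < rho2 ->
  ((rho2 * cos phi2) +i* (rho2 * sin phi2)) ^+ n = ((rho1 * cos phi1) +i* (rho1 * sin phi1)) ^+ n ->
  rho2 = rho1 /\ cos (INR n * phi2 - INR n * phi1) = 1.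
Proof.
move=> n0 h1 h2; rewrite !demoivre => -[E1 E2].
have p1 : 0 < rho1 ^+ n by apply: exprn_gt0.
have p2 : 0 < rho2 ^+ n by apply: exprn_gt0.
have N : forall t : R, Rplus (Rmult (cos t) (cos t)) (Rmult (sin t) (sin t)) = IZR 1.
  by move=> t; rewrite -(sin2_cos2 t) /Rsqr Rplus_comm.
have q1 : Rlt 0 (rho1 ^+ n) by apply/RltP.
have q2 : Rlt 0 (rho2 ^+ n) by apply/RltP.
have [ea ec] := trig_fin _ _ _ _ _ _ q2 q1 E1 E2 (N _) (N _).
split.
  by apply/eqP; rewrite -(eqrXn2 n0) ?ea // ltW.
by rewrite cos_minus.
Qed.
End Final.
Section Core.
Local Open Scope ring_scope.
Local Open Scope complex_scope.

Lemma core (n : nat) (A : nat -> point) (O : point) (r : R) :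
  (2 <= n)%coq_nat -> Rlt 0 r ->
  (forall i j, (i < n)%coq_nat -> (j < n)%coq_nat -> i <> j -> A i <> A j) ->
  (forall k : nat, (1 <= k)%coq_nat -> (k <= Nat.sub n 1)%coq_nat ->
     forall P Q : point, on_circle O r P -> on_circle O r Q ->
       Defs.sumn n (fun i => pow (dist2 P (A i)) k) = Defs.sumn n (fun i => pow (dist2 Q (A i)) k)) ->
  regular_ngon_centred O n A.
Proof.
move=> hn hr hd hc.
have r0 : r != 0 by apply: lt0r_neq0; apply/RltP.
pose x i := fst (A i) - fst O.
pose y i := snd (A i) - snd O.
have hsum : forall k, (0 < k < n)%N -> \sum_(0 <= i < n) (x i +i* y i)^+k = 0.
  move=> k /andP[k0 kn].
  pose P0 : point := (fst O + r, snd O).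
  pose C := Defs.sumn n (fun i => pow (dist2 P0 (A i)) k).
  apply: (step1 _ k x y r C r0 k0) => s.
  have dp : 0 < 1 + s^+2 by have := sqr_ge0 s; lra.
  have d0 : 1 + s^+2 != 0 by apply: lt0r_neq0.
  pose P : point := (fst O + r * (1 - s^+2) / (1 + s^+2), snd O + r * (2 * s) / (1 + s^+2)).
  have hP : on_circle O r P.
    rewrite /on_circle /dist2 !RpowE /= !RminusE !RplusE. field. exact: d0.
  have hP0 : on_circle O r P0.
    rewrite /on_circle /dist2 !RpowE /= !RminusE !RplusE. ring.
  have hk1 : (1 <= k)%coq_nat by move/ssrnat.ltP: k0; lia.
  have hk2 : (k <= Nat.sub n 1)%coq_nat by move/ssrnat.ltP: kn; lia.
  have H := hc k hk1 hk2 P P0 hP hP0.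
  rewrite !sumn_big in H.
  rewrite /C sumn_big -H mulr_suml; apply: eq_bigr => i _.
  rewrite RpowE -exprMn; congr (_ ^+ _).
  rewrite /dist2 /x /y !RpowE /= !RminusE !RplusE. field. exact: d0.
have hpow := newton_pow _ n (fun i => x i +i* y i) hsum.
have n0 : (0 < n)%N by apply/ssrnat.ltP; lia.
have hz : forall i, (i < n)%N -> (x i +i* y i) ^+ n = (x 0%N +i* y 0%N) ^+ n.
  by move=> i hi; rewrite (hpow i hi) (hpow 0%N n0).
apply: assemble => //.
- move=> i /ssrnat.ltP hi.
  case: (Req_EM_T (x i) 0) => hx; last by left.
  case: (Req_EM_T (y i) 0) => hy; last by right.
  exfalso.
  have z0 : forall j, (j < n)%N -> x j = 0 /\ y j = 0.
    move=> j hj.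
    have : (x j +i* y j) ^+ n == 0.
      by rewrite hz // -(hz i hi) hx hy expf_eq0 n0 /=.
    rewrite expf_eq0 n0 /= => /eqP [-> ->]. by [].
  have eA : forall j, (j < n)%N -> A j = O.
    move=> j hj; have [e1 e2] := z0 j hj.
    rewrite [A j]surjective_pairing [O]surjective_pairing.
    by rewrite (subr0_eq e1) (subr0_eq e2).
  have n1 : (1 < n)%N by apply/ssrnat.ltP; lia.
  apply: (hd 0%N 1%N); [apply/ssrnat.ltP; lia | apply/ssrnat.ltP; lia | by [] | ].
  by rewrite (eA 0%N n0) (eA 1%N n1).
- move=> i /ssrnat.ltP hi rho1 phi1 rho2 phi2 hr1 hr2 hx0 hy0 hx hy.
  apply: (demoivre_eq n rho1 phi1 rho2 phi2 n0); try by apply/RltP.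
  have -> : (rho2 * cos phi2) +i* (rho2 * sin phi2) = x i +i* y i.
    by congr Complex; symmetry.
  have -> : (rho1 * cos phi1) +i* (rho1 * sin phi1) = x 0%N +i* y 0%N.
    by congr Complex; symmetry.
  exact: hz.
Qed.
End Core.
End Aux.

(* Points A_1..A_n are indexed as A 0, ..., A (n-1).
   |PA_i|^{2k} = (dist2 P (A i))^k. *)
Theorem mainTheorem1 (n : nat) (A : nat -> point) (O : point) (r : R) :
  (2 <= n)%nat ->
  0 < r ->
  (forall i j, (i < n)%nat -> (j < n)%nat -> i <> j -> A i <> A j) ->
  (forall k : nat, (1 <= k)%nat -> (k <= n - 1)%nat ->
     forall P Q : point, on_circle O r P -> on_circle O r Q ->
       sumn n (fun i => dist2 P (A i) ^ k) = sumn n (fun i => dist2 Q (A i) ^ k)) ->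
  regular_ngon_centred O n A.
Proof.
  exact (@Aux.core n A O r).
Qed.
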